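(* Let $G$ be an optimal digraph with $\beta_G > \alpha_G$, and let $u,v,w$ be distinct vertices appearing in clockwise order. Then not all of the ordered pairs $(u,v),(v,w),(w,u)$ are extreme. Moreover, if two of them are extreme, then either all three of $uv, vw, wu$ are edges of $G$, or two of them are edges of $G$ and the third is a shortest non-edge.
   Context: Digraphs are finite, loopless, with at most one edge $uv$ per ordered pair. A digraph is $2$-free if no distinct $u,v$ have both $uv,vu$ as edges. A circular interval digraph is a digraph together with a fixed arrangement of its vertices in a circle such that for all distinct $u,v,w$ in clockwise order with $uw\in E(G)$, also $uv,vw\in E(G)$. For distinct $u,v$, $d(u,v) = 1 + |\{w: u,w,v \text{ distinct, in clockwise order}\}|$; this is the length of the ordered pair $uv$. A non-edge is an ordered pair $(u,v)$ of distinct vertices with neither $uv$ nor $vu$ an edge; its length is $d(u,v)$. $\alpha_G$ is the minimum length of a non-edge ($\infty$ if none) and $\beta_G$ the maximum length of an edge ($0$ if none). A longest edge is an edge of length $\beta_G$; a shortest non-edge is a non-edge of length $\alpha_G$. An ordered pair is extreme if it is a longest edge or a shortest non-edge. $\xi(G)$ is the number of pairs $(uv,(w,x))$ with $uv\in E(G)$, $(w,x)$ a non-edge, $d(u,v)>d(w,x)$. $\tilde P_3(G)$ is the number of triples $(a,b,c)$ of distinct vertices with $ab,bc\in E(G)$ and $ac,ca\notin E(G)$. For fixed $n\ge 4$, $G$ is optimal if it is a $2$-free circular interval digraph on $n$ vertices maximizing $\tilde P_3$ among all such digraphs and, subject to this, minimizing $\xi(G)$. *)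

(* Defs.v *)
From mathcomp Require Import all_boot.
Set Implicit Arguments. Unset Strict Implicit. Unset Printing Implicit Defensive.

(* Vertices are 'I_n, arranged clockwise in the order 0, 1, ..., n-1.
   A digraph is an edge relation E : rel 'I_n (at most one edge per ordered
   pair is automatic). *)

Section Defs.
Variable n : nat.
Implicit Types (E : rel 'I_n) (u v w x : 'I_n).

(* d(u,v) = 1 + #{w : u,w,v distinct in clockwise order} = (v - u) mod n *)
Definition dist u v : nat := (v + n - u) %% n.

Definition cw u v w : bool :=
  [&& u != v, v != w, u != w & dist u v < dist u w].

Definition loopless E : bool := [forall u, ~~ E u u].

Definition two_free E : bool :=
  [forall u, forall v, (u != v) ==> ~~ (E u v && E v u)].

Definition circ_interval E : bool :=
  [forall u, forall v, forall w, (cw u v w && E u w) ==> (E u v && E v w)].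

Definition cid2 E : bool := [&& loopless E, two_free E & circ_interval E].

Definition nonedge E u v : bool := [&& u != v, ~~ E u v & ~~ E v u].

(* alpha_G : minimum length of a non-edge; "infinity" is represented by n,
   which exceeds every length (lengths are at most n-1). *)
Definition alpha E : nat :=
  \big[minn/n]_(p : 'I_n * 'I_n | nonedge E p.1 p.2) dist p.1 p.2.

Definition beta E : nat :=
  \max_(p : 'I_n * 'I_n | E p.1 p.2) dist p.1 p.2.

Definition longest_edge E u v : bool := E u v && (dist u v == beta E).
Definition shortest_nonedge E u v : bool :=
  nonedge E u v && (dist u v == alpha E).
Definition extreme E u v : bool := longest_edge E u v || shortest_nonedge E u v.

Definition xi E : nat :=
  #|[set q : ('I_n * 'I_n) * ('I_n * 'I_n) |
      [&& E q.1.1 q.1.2, nonedge E q.2.1 q.2.2 &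
          dist q.2.1 q.2.2 < dist q.1.1 q.1.2]]|.

Definition P3 E : nat :=
  #|[set t : 'I_n * 'I_n * 'I_n |
      [&& t.1.1 != t.1.2, t.1.2 != t.2, t.1.1 != t.2,
          E t.1.1 t.1.2, E t.1.2 t.2, ~~ E t.1.1 t.2 & ~~ E t.2 t.1.1]]|.

Definition optimal E : Prop :=
  cid2 E /\
  forall E' : rel 'I_n, cid2 E' ->
    P3 E' <= P3 E /\ (P3 E' = P3 E -> xi E <= xi E').

End Defs.

(* Main.v *)
Require Import Defs.
From mathcomp Require Import all_boot zify.
Set Implicit Arguments. Unset Strict Implicit. Unset Printing Implicit Defensive.

Lemma distE n (u v : 'I_n) : dist u v = if u <= v then v - u else v + n - u.
Proof.
rewrite /dist; have hu := ltn_ord u; have hv := ltn_ord v.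
case: leqP => h.
  have -> : v + n - u = (v - u) + n by lia.
  by rewrite modnDr modn_small //; lia.
by rewrite modn_small //; lia.
Qed.

Lemma dist_lt n (u v : 'I_n) : dist u v < n.
Proof. rewrite distE; have := ltn_ord u; have := ltn_ord v; case: ifP; lia. Qed.

Lemma dist0 n (u v : 'I_n) : (dist u v == 0) = (u == v).
Proof.
rewrite distE; have hu := ltn_ord u; have hv := ltn_ord v.
apply/idP/idP.
  move=> h1; apply/eqP/val_inj => /=; move: h1; case: ifP; lia.
by move/eqP->; rewrite leqnn subnn.
Qed.

Lemma dist_pos n (u v : 'I_n) : u != v -> 0 < dist u v.
Proof. by rewrite -dist0 lt0n. Qed.

Lemma neq_ord n (u v : 'I_n) : (u != v) = (nat_of_ord u != nat_of_ord v).
Proof. by []. Qed.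

Ltac dsimp := rewrite ?distE ?neq_ord; 
  repeat match goal with |- context [nat_of_ord ?x] =>
    let h := fresh "hord" in have h := ltn_ord x; move: h; move: (nat_of_ord x) => ? end;
  repeat case: ifP.

Lemma dist_sym n (u v : 'I_n) : u != v -> dist v u = n - dist u v.
Proof. dsimp; lia. Qed.

Lemma dist_add n (u v w : 'I_n) : dist u v <= dist u w -> dist u w = dist u v + dist v w.
Proof. dsimp; lia. Qed.

Lemma dist_inj n (u v w : 'I_n) : dist u v = dist u w -> v = w.
Proof. move=> h; apply/val_inj => /=; move: h; rewrite !distE; have := ltn_ord u; have := ltn_ord v; have := ltn_ord w; repeat case: ifP; lia. Qed.

Lemma dist_ex n (u : 'I_n) j : j < n -> {z : 'I_n | dist u z = j}.
Proof.
move=> hj.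
have hz : (u + j) %% n < n by rewrite ltn_mod; lia.
exists (Ordinal hz); rewrite distE /=; have hu := ltn_ord u.
case: (ltnP (u + j) n) => h.
  rewrite modn_small //; case: ifP; lia.
have -> : (u + j) %% n = u + j - n.
  have -> : u + j = (u + j - n) + n by lia.
  by rewrite modnDr modn_small; lia.
case: ifP; lia.
Qed.

Lemma cw_alt n (x z y : 'I_n) : x != z -> z != y -> x != y ->
  (dist x z < dist x y) = (dist z y < dist x y).
Proof. dsimp; lia. Qed.

Lemma card_ord_pred N (P : pred nat) : #|[set j : 'I_N | P j]| = \sum_(0 <= j < N) (P j : nat).
Proof.
rewrite -sum1_card big_mkcond /= big_mkord; apply: eq_bigr => i _.
by rewrite inE; case: (P i).
Qed.

Lemma sum_int N lo hi : \sum_(0 <= j < N) ((lo <= j <= hi) : nat) = minn N hi.+1 - lo.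
Proof.
elim: N => [|N IH]; first by rewrite big_geq //; lia.
rewrite big_nat_recr //= IH; case: (boolP (lo <= N <= hi)) => h /=; lia.
Qed.

Lemma card_dist n (u : 'I_n) (P : pred nat) :
  #|[set z | P (dist u z)]| = #|[set j : 'I_n | P j]|.
Proof.
pose f (z : 'I_n) := Ordinal (dist_lt u z).
have finj : injective f by move=> a b /(congr1 val) /= /dist_inj.
rewrite -[RHS](card_preimset _ finj); apply: eq_card => z.
by rewrite !inE /=.

Qed.

Lemma card_dist_int n (u : 'I_n) lo hi : hi < n ->
  #|[set z | lo <= dist u z <= hi]| = hi.+1 - lo.
Proof.
move=> h; rewrite (card_dist u (fun j => lo <= j <= hi)) (card_ord_pred n (fun j => lo <= j <= hi)) sum_int; lia.
Qed.

Lemma dist_inj' n (u v w : 'I_n) : dist v u = dist w u -> v = w.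
Proof. move=> h; apply/val_inj => /=; move: h; rewrite !distE; have := ltn_ord u; have := ltn_ord v; have := ltn_ord w; repeat case: ifP; lia. Qed.

Lemma card_dist' n (u : 'I_n) (P : pred nat) :
  #|[set z | P (dist z u)]| = #|[set j : 'I_n | P j]|.
Proof.
pose f (z : 'I_n) := Ordinal (dist_lt z u).
have finj : injective f by move=> a b /(congr1 val) /= /dist_inj'.
rewrite -[RHS](card_preimset _ finj); apply: eq_card => z.
by rewrite !inE /=.
Qed.

Lemma card_dist_int' n (u : 'I_n) lo hi : hi < n ->
  #|[set z | lo <= dist z u <= hi]| = hi.+1 - lo.
Proof.
move=> h; rewrite (card_dist' u (fun j => lo <= j <= hi)) (card_ord_pred n (fun j => lo <= j <= hi)) sum_int; lia.
Qed.
Definition rr n (E : rel 'I_n) x := #|[set y | E x y]|.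
Definition ll n (E : rel 'I_n) y := #|[set x | E x y]|.

Lemma cid_loop n (E : rel 'I_n) x : cid2 E -> E x x = false.
Proof. by case/and3P => /forallP h _ _; apply/negbTE/h. Qed.

Lemma cid_2f n (E : rel 'I_n) x y : cid2 E -> E x y -> E y x = false.
Proof.
move=> hE hxy; case: (eqVneq x y) => [<-|ne]; first by rewrite cid_loop.
case/and3P: hE => _ /forallP h _; move: (h x) => /forallP /(_ y) /implyP /(_ ne).
by rewrite hxy /= => /negbTE.
Qed.

Lemma cid_int n (E : rel 'I_n) u v w : cid2 E -> cw u v w -> E u w -> E u v && E v w.
Proof.
case/and3P => _ _ /forallP h hc he.
by move: (h u) => /forallP /(_ v) /forallP /(_ w) /implyP; apply; rewrite hc he.
Qed.

Lemma cwE n (u v w : 'I_n) : cw u v w = [&& u != v, v != w, u != w & dist u v < dist u w].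
Proof. by []. Qed.

Lemma rrP n (E : rel 'I_n) x y : cid2 E -> E x y = (0 < dist x y <= rr E x).
Proof.
move=> hE; rewrite /rr.
pose S := [set z | E x z].
case: (set_0Vmem S) => [S0 | [y0 hy0]].
  have hy : (y \in S) = false by rewrite S0 inE.
  rewrite inE in hy; rewrite hy.
  by rewrite -/S S0 cards0; case: (dist x y).
have hc : 0 < #|S| by apply/card_gt0P; exists y0.
have [y1 hy1 hmax] := eq_bigmax_cond (fun z => dist x z) hc.
have hSE : S = [set z | 1 <= dist x z <= dist x y1].
  apply/setP => z; rewrite !inE.
  apply/idP/idP.
    move=> hz; rewrite -hmax.
    have hxz : x != z by apply/negP => /eqP e; move: hz; rewrite -e cid_loop.
    rewrite dist_pos // andTb.
    by apply: (@leq_bigmax_cond _ (fun i => i \in S)); rewrite inE.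
  case/andP => h1 h2.
  case: (eqVneq z y1) => [->|nz]; first by move: hy1; rewrite inE.
  have hy1' : E x y1 by move: hy1; rewrite inE.
  have hxz : x != z by rewrite -dist0 -lt0n.
  have hxy1 : x != y1 by apply/negP => /eqP e; move: hy1'; rewrite -e cid_loop.
  have hlt : dist x z < dist x y1.
    rewrite ltn_neqAle h2 andbT; apply/negP => /eqP /dist_inj e; by rewrite e eqxx in nz.
  by case/andP: (cid_int hE (u:=x) (v:=z) (w:=y1) (introT and4P (And4 hxz nz hxy1 hlt)) hy1').
have -> : #|[set y2 | E x y2]| = #|S| by [].
rewrite hSE (card_dist_int x 1 (dist_lt x y1)) subn1 succnK.
have -> : E x y = (y \in S) by rewrite inE.
by rewrite hSE inE.
Qed.


Lemma llP n (E : rel 'I_n) x y : cid2 E -> E x y = (0 < dist x y <= ll E y).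
Proof.
move=> hE; rewrite /ll.
pose S := [set z | E z y].
case: (set_0Vmem S) => [S0 | [y0 hy0]].
  have hy : (x \in S) = false by rewrite S0 inE.
  rewrite inE in hy; rewrite hy.
  by rewrite -/S S0 cards0; case: (dist x y).
have hc : 0 < #|S| by apply/card_gt0P; exists y0.
have [y1 hy1 hmax] := eq_bigmax_cond (fun z => dist z y) hc.
have hSE : S = [set z | 1 <= dist z y <= dist y1 y].
  apply/setP => z; rewrite !inE.
  apply/idP/idP.
    move=> hz; rewrite -hmax.
    have hxz : z != y by apply/negP => /eqP e; move: hz; rewrite -e cid_loop.
    rewrite dist_pos // andTb.
    by apply: (@leq_bigmax_cond _ (fun i => i \in S)); rewrite inE.
  case/andP => h1 h2.
  case: (eqVneq z y1) => [->|nz]; first by move: hy1; rewrite inE.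
  have hy1' : E y1 y by move: hy1; rewrite inE.
  have hzy : z != y by rewrite -dist0 -lt0n.
  have hy1y : y1 != y by apply/negP => /eqP e; move: hy1'; rewrite -e cid_loop.
  have hlt : dist z y < dist y1 y.
    rewrite ltn_neqAle h2 andbT; apply/negP => /eqP /dist_inj' e; by rewrite e eqxx in nz.
  have hy1z : y1 != z by rewrite eq_sym.
  have hcw : cw y1 z y by rewrite cwE hy1z hzy hy1y /= cw_alt.
  by case/andP: (cid_int hE hcw hy1').
have -> : #|[set x0 | E x0 y]| = #|S| by [].
rewrite hSE (card_dist_int' y 1 (dist_lt y1 y)) subn1 succnK.
have -> : E x y = (x \in S) by rewrite inE.
by rewrite hSE inE.
Qed.

Lemma rr_lt n (E : rel 'I_n) x : cid2 E -> rr E x < n.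
Proof.
move=> hE; rewrite /rr.
have h : [set y | E x y] \subset [set~ x].
  by apply/subsetP => y; rewrite !inE => hy; apply/negP => /eqP e; move: hy; rewrite e cid_loop.
have := subset_leq_card h; rewrite cardsC1 card_ord.
have := ltn_ord x; lia.
Qed.

Lemma ll_lt n (E : rel 'I_n) x : cid2 E -> ll E x < n.
Proof.
move=> hE; rewrite /ll.
have h : [set y | E y x] \subset [set~ x].
  by apply/subsetP => y; rewrite !inE => hy; apply/negP => /eqP e; move: hy; rewrite e cid_loop.
have := subset_leq_card h; rewrite cardsC1 card_ord.
have := ltn_ord x; lia.
Qed.

Lemma alpha_le n (E : rel 'I_n) a c : nonedge E a c -> alpha E <= dist a c.
Proof.
move=> h; rewrite /alpha.
have : (a, c) \in index_enum ('I_n * 'I_n)%type by rewrite mem_index_enum.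
elim: (index_enum _) => [//|p s IH]; rewrite in_cons big_cons.
case/orP => [/eqP <-|hs].
  by rewrite /= h; exact: geq_minl.
case: ifP => _; last exact: IH.
by apply: leq_trans (geq_minr _ _) (IH hs).
Qed.

Lemma alpha_ex n (E : rel 'I_n) : alpha E < n ->
  exists a c, nonedge E a c /\ dist a c = alpha E.
Proof.
rewrite /alpha.
apply: (big_ind (fun m => m < n -> exists a c, nonedge E a c /\ dist a c = m)).
- by rewrite ltnn.
- move=> x y hx hy /=.
  by have [->|->] : minn x y = x \/ minn x y = y by lia.
- by move=> [a c] /= hn _; exists a, c.
Qed.

Lemma beta_ge n (E : rel 'I_n) x y : E x y -> dist x y <= beta E.
Proof. move=> h; rewrite /beta; exact: (@leq_bigmax_cond _ (fun p => E p.1 p.2) (fun p => dist p.1 p.2) (x, y)). Qed.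

Lemma beta_ex n (E : rel 'I_n) : 0 < beta E -> exists x y, E x y /\ dist x y = beta E.
Proof.
rewrite /beta.
apply: (big_ind (fun m => 0 < m -> exists a c, E a c /\ dist a c = m)).
- by [].
- move=> x y hx hy /=.
  by have [->|->] : maxn x y = x \/ maxn x y = y by lia.
- by move=> [a c] /= hn _; exists a, c.
Qed.

Lemma alpha_pos n (E : rel 'I_n) : 0 < n -> 0 < alpha E.
Proof.
move=> hn; rewrite /alpha; apply: (big_ind (fun m => 0 < m)) => //.
- by move=> x y hx hy; rewrite leq_min hx hy.
- by move=> [a c] /and3P [h _ _]; apply: dist_pos.
Qed.

Definition del n (E : rel 'I_n) (x y : 'I_n) : rel 'I_n :=
  fun a b => E a b && ((a != x) || (b != y)).

Definition inT n (E : rel 'I_n) (a b c : 'I_n) : bool :=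
  [&& a != b, b != c, a != c, E a b, E b c, ~~ E a c & ~~ E c a].

Lemma P3E n (E : rel 'I_n) : P3 E = #|[set t | inT E t.1.1 t.1.2 t.2]|.
Proof. by []. Qed.

Lemma del_point n (E : rel 'I_n) x y a b c : E x y -> E y x = false ->
  inT (del E x y) a b c + [&& a == x, b == y & inT E x y c] + [&& b == x, c == y & inT E a x y]
  = inT E a b c + [&& a == x, c == y & inT (del E x y) x b y] + [&& a == y, c == x & inT (del E x y) y b x].
Proof.
move=> hxy hyx.
have nxy : x != y by apply/negP => /eqP e; move: hyx hxy; rewrite e => ->.
rewrite /inT /del.
case: (eqVneq a x) => [?|hax]; case: (eqVneq b y) => [?|hby];
case: (eqVneq b x) => [?|hbx]; case: (eqVneq c y) => [?|hcy];
case: (eqVneq a y) => [?|hay]; case: (eqVneq c x) => [?|hcx]; subst;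
rewrite ?eqxx in nxy *; try by [].
all: rewrite ?hxy ?hyx ?(negbTE nxy) ?(eq_sym y x) ?(negbTE nxy) /= ?andbT ?andbF ?orbT ?orbF //=.
all: rewrite ?(negbTE hax) ?(negbTE hby) ?(negbTE hbx) ?(negbTE hcy) ?(negbTE hay) ?(negbTE hcx) /= ?andbT ?andbF ?orbT ?orbF //=.
all: rewrite ?(eq_sym y) ?(eq_sym x).
all: rewrite ?(negbTE hax) ?(negbTE hby) ?(negbTE hbx) ?(negbTE hcy) ?(negbTE hay) ?(negbTE hcx) /= ?andbT ?andbF ?orbT ?orbF ?addn0 //=.
Qed.

Lemma card_sum (T : finType) (A : pred T) : #|[set t | A t]| = \sum_t (A t : nat).
Proof. rewrite -sum1_card big_mkcond /=; apply: eq_bigr => i _; by rewrite inE; case: (A i). Qed.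

Lemma slice12 n (P : pred 'I_n) (x y : 'I_n) :
  #|[set t : 'I_n * 'I_n * 'I_n | [&& t.1.1 == x, t.1.2 == y & P t.2]]| = #|[set c | P c]|.
Proof.
have inj : injective (fun c : 'I_n => (x, y, c)) by move=> a b [].
rewrite -(card_imset _ inj); apply: eq_card => [[[a b] c]]; rewrite !inE /=.
apply/idP/imsetP.
  by case/and3P => /eqP -> /eqP -> hc; exists c; rewrite ?inE.
by case=> c' hc' [-> -> ->]; rewrite !eqxx; rewrite inE in hc'.
Qed.

Lemma slice23 n (P : pred 'I_n) (x y : 'I_n) :
  #|[set t : 'I_n * 'I_n * 'I_n | [&& t.1.2 == x, t.2 == y & P t.1.1]]| = #|[set c | P c]|.
Proof.
have inj : injective (fun c : 'I_n => (c, x, y)) by move=> a b [].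
rewrite -(card_imset _ inj); apply: eq_card => [[[a b] c]]; rewrite !inE /=.
apply/idP/imsetP.
  by case/and3P => /eqP -> /eqP -> hc; exists a; rewrite ?inE.
by case=> c' hc' [-> -> ->]; rewrite !eqxx; rewrite inE in hc'.
Qed.

Lemma slice13 n (P : pred 'I_n) (x y : 'I_n) :
  #|[set t : 'I_n * 'I_n * 'I_n | [&& t.1.1 == x, t.2 == y & P t.1.2]]| = #|[set c | P c]|.
Proof.
have inj : injective (fun c : 'I_n => (x, c, y)) by move=> a b [].
rewrite -(card_imset _ inj); apply: eq_card => [[[a b] c]]; rewrite !inE /=.
apply/idP/imsetP.
  by case/and3P => /eqP -> /eqP -> hc; exists b; rewrite ?inE.
by case=> c' hc' [-> -> ->]; rewrite !eqxx; rewrite inE in hc'.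
Qed.

Lemma del_P3 n (E : rel 'I_n) x y : E x y -> E y x = false ->
  P3 (del E x y) + #|[set c | inT E x y c]| + #|[set a | inT E a x y]|
  = P3 E + #|[set b | inT (del E x y) x b y]| + #|[set b | inT (del E x y) y b x]|.
Proof.
move=> hxy hyx.
rewrite !P3E -(slice12 (fun c => inT E x y c) x y) -(slice23 (fun a => inT E a x y) x y).
rewrite -(slice13 (fun b => inT (del E x y) x b y) x y) -(slice13 (fun b => inT (del E x y) y b x) y x).
rewrite !card_sum -!big_split /=; apply: eq_bigr => [[[a b] c]] _ /=.
exact: del_point.
Qed.

Lemma dist_tr n (u v w : 'I_n) :
  dist u w = if dist u v + dist v w < n then dist u v + dist v w else dist u v + dist v w - n.
Proof. rewrite !distE; have := ltn_ord u; have := ltn_ord v; have := ltn_ord w; repeat case: ifP; lia. Qed.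

Lemma dist_rev n (u w : 'I_n) : dist w u = if dist u w == 0 then 0 else n - dist u w.
Proof. rewrite !distE; have := ltn_ord u; have := ltn_ord w; repeat case: ifP; lia. Qed.

Lemma pq_le n (E : rel 'I_n) x y : cid2 E -> E x y ->
  rr E y <= n - dist x y - 1 /\ ll E x <= n - dist x y - 1.
Proof.
move=> hE hxy; have hyx := cid_2f hE hxy.
have nxy : x != y by apply/negP => /eqP e; move: hxy; rewrite e cid_loop.
have hd := dist_sym nxy; have := dist_pos nxy; have := dist_lt x y.
move: hyx; rewrite (rrP _ _ hE) => hr.
move: (cid_2f hE hxy); rewrite (llP _ _ hE) => hl.
lia.
Qed.


Lemma cardX1 n (E : rel 'I_n) x y : cid2 E -> E x y -> rr E x = dist x y ->
  #|[set c | inT E x y c]| = minn (rr E y) (n - dist x y - 1 - ll E x).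
Proof.
move=> hE hxy hrx.
have nxy : x != y by apply/negP => /eqP e; move: hxy; rewrite e cid_loop.
have [hp hq] := pq_le hE hxy.
have hk := dist_pos nxy; have hkn := dist_lt x y.
transitivity #|[set c | 1 <= dist y c <= minn (rr E y) (n - dist x y - 1 - ll E x)]|; last first.
  by rewrite card_dist_int; lia.
apply: eq_card => c; rewrite !inE /inT.
rewrite hxy nxy /= (rrP y c hE) (rrP x c hE) (llP c x hE) hrx.
rewrite -(dist0 y c) -(dist0 x c) (dist_rev x c) (dist_tr x y c).
have := dist_lt y c.
move: (dist x y) (dist y c) (rr E y) (ll E x) hk hkn hp hq => k j p q *.
do ![case: ifP => ?]; lia.
Qed.

Lemma cardX2 n (E : rel 'I_n) x y : cid2 E -> E x y -> ll E y = dist x y ->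
  #|[set a | inT E a x y]| = minn (ll E x) (n - dist x y - 1 - rr E y).
Proof.
move=> hE hxy hly.
have nxy : x != y by apply/negP => /eqP e; move: hxy; rewrite e cid_loop.
have [hp hq] := pq_le hE hxy.
have hk := dist_pos nxy; have hkn := dist_lt x y.
transitivity #|[set a | 1 <= dist a x <= minn (ll E x) (n - dist x y - 1 - rr E y)]|; last first.
  by rewrite card_dist_int'; lia.
apply: eq_card => a; rewrite !inE /inT.
rewrite hxy nxy /= ?andbT (llP a x hE) (llP a y hE) (rrP y a hE) hly.
rewrite -(dist0 a x) -(dist0 a y) (dist_rev a y) (dist_tr a x y).
have := dist_lt a x.
move: (dist x y) (dist a x) (rr E y) (ll E x) hk hkn hp hq => k j p q *.
do ![case: ifP => ?]; lia.
Qed.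

Lemma cardY1 n (E : rel 'I_n) x y : cid2 E -> E x y -> rr E x = dist x y -> ll E y = dist x y ->
  #|[set b | inT (del E x y) x b y]| = dist x y - 1.
Proof.
move=> hE hxy hrx hly.
have nxy : x != y by apply/negP => /eqP e; move: hxy; rewrite e cid_loop.
have hk := dist_pos nxy; have hkn := dist_lt x y.
transitivity #|[set b | 1 <= dist x b <= dist x y - 1]|; last first.
  by rewrite card_dist_int; lia.
apply: eq_card => b; rewrite !inE /inT /del.
rewrite (rrP x b hE) (llP b y hE) (cid_2f hE hxy) !eqxx nxy /= ?orbF ?andbT.
rewrite -(dist0 x b) -(dist0 b y) (eq_sym b x) -(dist0 x b) andbF /=.
have e := dist_tr x b y.
rewrite hrx hly.
move: e (dist_lt x b) (dist_lt b y) hk hkn.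
move: (dist x y) (dist x b) (dist b y) => k j j2 e1 e2 e3 e4 e5.
by move: e1; case: ifP; lia.
Qed.

Lemma cardY2 n (E : rel 'I_n) x y : cid2 E -> E x y ->
  #|[set b | inT (del E x y) y b x]| = rr E y + ll E x - (n - dist x y - 1).
Proof.
move=> hE hxy.
have nxy : x != y by apply/negP => /eqP e; move: hxy; rewrite e cid_loop.
have hk := dist_pos nxy; have hkn := dist_lt x y.
have [hp hq] := pq_le hE hxy.
have hyx := dist_sym nxy.
transitivity #|[set b | n - dist x y - ll E x <= dist y b <= rr E y]|; last first.
  by rewrite card_dist_int; [lia | have := rr_lt y hE; lia].
apply: eq_card => b; rewrite !inE /inT /del.
rewrite (cid_2f hE hxy) !eqxx (eq_sym y x) nxy /= ?orbF ?orbT ?andbT ?andbF /=.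
rewrite (rrP y b hE) (llP b x hE).
rewrite -(dist0 y b) -(dist0 b x).
have e := dist_tr y b x.
move: e hyx (dist_lt y b) (dist_lt b x) hk hkn hp hq.
move: (dist x y) (dist y x) (dist y b) (dist b x) (rr E y) (ll E x) => k k' j j2 p q e1 e2 e3 e4 e5 e6 e7 e8.
by move: e1; case: ifP; lia.
Qed.

Lemma del_formula n (E : rel 'I_n) x y : cid2 E -> E x y ->
  rr E x = dist x y -> ll E y = dist x y ->
  P3 (del E x y) + minn (rr E y) (n - dist x y - 1 - ll E x)
    + minn (ll E x) (n - dist x y - 1 - rr E y)
  = P3 E + (dist x y - 1) + (rr E y + ll E x - (n - dist x y - 1)).
Proof.
move=> hE hxy hrx hly.
rewrite -(cardX1 hE hxy hrx) -(cardX2 hE hxy hly) -(cardY1 hE hxy hrx hly) -(cardY2 hE hxy).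
exact: del_P3 hxy (cid_2f hE hxy).
Qed.

Lemma cid2I n (E : rel 'I_n) :
  (forall u, E u u = false) -> (forall u v, E u v -> E v u = false) ->
  (forall u v w, cw u v w -> E u w -> E u v && E v w) -> cid2 E.
Proof.
move=> h1 h2 h3; apply/and3P; split.
- by apply/forallP => u; rewrite h1.
- apply/forallP => u; apply/forallP => v; apply/implyP => _.
  by apply/negP => /andP [hu hv]; move: (h2 _ _ hu); rewrite hv.
- apply/forallP => u; apply/forallP => v; apply/forallP => w; apply/implyP.
  by case/andP => hc he; apply: h3.
Qed.

Lemma rr_le_beta n (E : rel 'I_n) x : cid2 E -> rr E x <= beta E.
Proof.
move=> hE; case: (posnP (rr E x)) => [->//|hp].
have [z hz] := dist_ex x (rr_lt x hE).
have : E x z by rewrite (rrP x z hE) hz hp leqnn.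
by move/beta_ge; rewrite hz.
Qed.

Lemma ll_le_beta n (E : rel 'I_n) x : cid2 E -> ll E x <= beta E.
Proof.
move=> hE; case: (posnP (ll E x)) => [->//|hp].
have hlt := ll_lt x hE.
have [z hz] := dist_ex x (j := n - ll E x) ltac:(lia).
have nxz : x != z by rewrite -dist0 hz; lia.
have hzx : dist z x = ll E x by rewrite (dist_sym nxz) hz; have := ltn_ord x; lia.
have : E z x by rewrite (llP z x hE) hzx hp leqnn.
by move/beta_ge; rewrite hzx.
Qed.

Definition addE n (E : rel 'I_n) (a c : 'I_n) : rel 'I_n :=
  fun p q => E p q || ((p == a) && (q == c)).

Lemma cid_del n (E : rel 'I_n) x y : cid2 E -> E x y -> rr E x = dist x y -> ll E y = dist x y ->
  cid2 (del E x y).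
Proof.
move=> hE hxy hrx hly; apply: cid2I.
- by move=> u; rewrite /del cid_loop.
- by move=> u v /andP [h _]; rewrite /del (cid_2f hE h).
move=> u v w hc /andP [huw hne]; rewrite /del.
case/andP: (cid_int hE hc huw) => huv hvw; rewrite huv hvw /=.
move: (hc); rewrite cwE => /and4P [n1 n2 n3 hlt].
apply/andP; split.
- rewrite -negb_and; apply/negP => /andP [/eqP eu /eqP ev]; subst u v.
  move: huw; rewrite (rrP x w hE) hrx => /andP [_ h]; lia.
- rewrite -negb_and; apply/negP => /andP [/eqP eu /eqP ev]; subst v w.
  move: huw; rewrite (llP u y hE) hly => /andP [_ h].
  have : dist x y < dist u y by rewrite -cw_alt.
  lia.
Qed.

Lemma cid_add n (E : rel 'I_n) a c : cid2 E -> nonedge E a c ->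
  rr E a = dist a c - 1 -> ll E c = dist a c - 1 -> cid2 (addE E a c).
Proof.
move=> hE /and3P [nac hac hca] hra hlc; apply: cid2I.
- move=> u; rewrite /addE (cid_loop _ hE) /=; apply/negbTE/negP => /andP [/eqP e1 /eqP e2].
  by move: nac; rewrite -e1 -e2 eqxx.
- move=> u v; rewrite /addE => /orP [h|/andP [/eqP e1 /eqP e2]].
    rewrite (cid_2f hE h) /=; apply/negbTE/negP => /andP [/eqP e3 /eqP e4]; subst.
    by move: hca; rewrite h.
  subst; rewrite (negbTE hca) /=; apply/negbTE/negP => /andP [/eqP e3 _].
  by move: nac; rewrite e3 eqxx.
move=> u v w hc; rewrite /addE => /orP [h|/andP [/eqP e1 /eqP e2]].
  by case/andP: (cid_int hE hc h) => -> ->.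
subst u w.
move: (hc); rewrite cwE => /and4P [n1 n2 n3 hlt].
have hlt2 : dist v c < dist a c by rewrite -cw_alt.
rewrite (rrP a v hE) (llP v c hE) hra hlc (dist_pos n1) (dist_pos n2) /=.
apply/andP; split; apply/orP; left; lia.
Qed.

Lemma P3_ext n (E F : rel 'I_n) : (forall a b, E a b = F a b) -> P3 E = P3 F.
Proof. by move=> h; rewrite !P3E; apply: eq_card => t; rewrite !inE /inT !h. Qed.

Lemma del_add n (E : rel 'I_n) a c : E a c = false -> forall p q, del (addE E a c) a c p q = E p q.
Proof.
move=> hac p q; rewrite /del /addE.
case: (eqVneq p a) => [->|hp]; case: (eqVneq q c) => [->|hq] //=; rewrite ?hac ?orbF ?andbT //.
Qed.

Lemma rr_ext n (E : rel 'I_n) x K : K < n -> (forall z, E x z = (0 < dist x z <= K)) -> rr E x = K.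
Proof.
move=> hK h; rewrite /rr.
transitivity #|[set z | 1 <= dist x z <= K]|; last by rewrite card_dist_int //; lia.
by apply: eq_card => z; rewrite !inE h.
Qed.

Lemma ll_ext n (E : rel 'I_n) x K : K < n -> (forall z, E z x = (0 < dist z x <= K)) -> ll E x = K.
Proof.
move=> hK h; rewrite /ll.
transitivity #|[set z | 1 <= dist z x <= K]|; last by rewrite card_dist_int' //; lia.
by apply: eq_card => z; rewrite !inE h.
Qed.

Lemma add_rr n (E : rel 'I_n) a c : cid2 E -> nonedge E a c -> rr E a = dist a c - 1 ->
  rr (addE E a c) a = dist a c.
Proof.
move=> hE /and3P [nac hac hca] hra; apply: rr_ext; first exact: dist_lt.
move=> z; rewrite /addE eqxx andTb (rrP a z hE) hra.
have := dist_pos nac.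
case: (eqVneq z c) => [->|hz] /=; first by rewrite orbT leqnn => ->.
have : dist a z != dist a c by apply/negP => /eqP /dist_inj e; move: hz; rewrite e eqxx.
rewrite orbF; lia.
Qed.

Lemma add_ll n (E : rel 'I_n) a c : cid2 E -> nonedge E a c -> ll E c = dist a c - 1 ->
  ll (addE E a c) c = dist a c.
Proof.
move=> hE /and3P [nac hac hca] hlc; apply: ll_ext; first exact: dist_lt.
move=> z; rewrite /addE eqxx andbT (llP z c hE) hlc.
have := dist_pos nac.
case: (eqVneq z a) => [->|hz] /=; first by rewrite orbT leqnn => ->.
have : dist z c != dist a c by apply/negP => /eqP /dist_inj' e; move: hz; rewrite e eqxx.
rewrite orbF; lia.
Qed.

Lemma add_rr_other n (E : rel 'I_n) a c : a != c -> rr (addE E a c) c = rr E c.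
Proof.
move=> nac; rewrite /rr; apply: eq_card => z; rewrite !inE /addE.
by rewrite eq_sym (negbTE nac) /= orbF.
Qed.

Lemma add_ll_other n (E : rel 'I_n) a c : a != c -> ll (addE E a c) a = ll E a.
Proof.
move=> nac; rewrite /ll; apply: eq_card => z; rewrite !inE /addE.
by rewrite (negbTE nac) andbF orbF.
Qed.

Lemma xi_add n (E : rel 'I_n) a c x y : nonedge E a c -> dist a c = alpha E ->
  E x y -> alpha E < dist x y -> xi (addE E a c) < xi E.
Proof.
move=> hne hd hxy hlt; rewrite /xi; apply: proper_card; apply/properP; split.
  apply/subsetP => [[[e1 e2] [f1 f2]]]; rewrite !inE /= => /and3P [he hf hl].
  have hf' : nonedge E f1 f2.
    by move: hf; rewrite /nonedge /addE => /and3P [-> /norP [-> _] /norP [-> _]].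
  rewrite hf' hl andbT andbT.
  move: he; rewrite /addE => /orP [//|/andP [/eqP e1a /eqP e2c]]; subst.
  by have := alpha_le hf'; lia.
pose t := ((x, y), (a, c)); exists t.
  by rewrite inE /= hxy hne hd hlt.
by rewrite inE /= /nonedge /addE !eqxx /= orbT /= andbF /= ?andbF.
Qed.

Lemma WL n (E : rel 'I_n) x y : optimal E -> E x y -> dist x y = beta E ->
  (beta E - 1) + (rr E y + ll E x - (n - beta E - 1))
  <= minn (rr E y) (n - beta E - 1 - ll E x) + minn (ll E x) (n - beta E - 1 - rr E y).
Proof.
move=> [hE hopt] hxy hd.
have hrx : rr E x = dist x y.
  have := rr_le_beta x hE; move: hxy; rewrite (rrP x y hE) => /andP [_ h]; lia.
have hly : ll E y = dist x y.
  have := ll_le_beta y hE; move: hxy; rewrite (llP x y hE) => /andP [_ h]; lia.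
have := del_formula hE hxy hrx hly.
have [h1 _] := hopt _ (cid_del hE hxy hrx hly).
rewrite hd; lia.
Qed.

Lemma WS n (E : rel 'I_n) a c : optimal E -> alpha E < beta E -> nonedge E a c ->
  dist a c = alpha E -> rr E a = alpha E - 1 -> ll E c = alpha E - 1 ->
  minn (rr E c) (n - alpha E - 1 - ll E a) + minn (ll E a) (n - alpha E - 1 - rr E c)
  < (alpha E - 1) + (rr E c + ll E a - (n - alpha E - 1)).
Proof.
move=> [hE hopt] hab hne hd hra hlc.
have nac : a != c by case/and3P: hne.
have hac : E a c = false by case/and3P: hne => _ /negbTE.
rewrite -hd in hra hlc.
have hE' := cid_add hE hne hra hlc.
have hE'ac : addE E a c a c by rewrite /addE !eqxx orbT.
have := del_formula hE' hE'ac (add_rr hE hne hra) (add_ll hE hne hlc).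
rewrite (add_rr_other E nac) (add_ll_other E nac).
rewrite (P3_ext (del_add hac)).
have [x [y [hxy hxyd]]] := beta_ex (leq_ltn_trans (leq0n _) hab).
have hxi := xi_add hne hd hxy (ltac:(by rewrite hxyd)) .
have [h1 h2] := hopt _ hE'.
have hlt : P3 (addE E a c) < P3 E.
  rewrite ltn_neqAle h1 andbT; apply/negP => /eqP /h2; lia.
rewrite hd; lia.
Qed.

Lemma rr_nedge n (E : rel 'I_n) x z : cid2 E -> x != z -> E x z = false -> rr E x < dist x z.
Proof. move=> hE nxz; rewrite (rrP x z hE) (dist_pos nxz) /= => /negbT; rewrite -ltnNge. done. Qed.

Lemma ll_nedge n (E : rel 'I_n) x z : cid2 E -> z != x -> E z x = false -> ll E x < dist z x.
Proof. move=> hE nxz; rewrite (llP z x hE) (dist_pos nxz) /= => /negbT; rewrite -ltnNge. done. Qed.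

Lemma rr_edge n (E : rel 'I_n) x z : cid2 E -> E x z -> dist x z <= rr E x.
Proof. by move=> hE; rewrite (rrP x z hE) => /andP []. Qed.

Lemma ll_edge n (E : rel 'I_n) x z : cid2 E -> E z x -> dist z x <= ll E x.
Proof. by move=> hE; rewrite (llP z x hE) => /andP []. Qed.

Lemma G0 n (E : rel 'I_n) : optimal E -> alpha E < beta E -> 2 * beta E <= n.
Proof.
move=> hopt hab; have hE := hopt.1.
have [x [y [hxy hd]]] := beta_ex (leq_ltn_trans (leq0n _) hab).
have := WL hopt hxy hd.
have [hp hq] := pq_le hE hxy; rewrite hd in hp hq.
have := dist_lt x y; rewrite hd; lia.
Qed.

Lemma G1 n (E : rel 'I_n) x : optimal E -> alpha E < beta E ->
  alpha E - 1 <= rr E x /\ alpha E - 1 <= ll E x.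
Proof.
move=> hopt hab; have hE := hopt.1; have h0 := G0 hopt hab.
have hn := ltn_ord x.
case: (leqP (alpha E) 1) => ha; first by split; lia.
split.
- have [z hz] := dist_ex x (j := alpha E - 1) ltac:(lia).
  have nxz : x != z by rewrite -dist0 hz; lia.
  case hxz : (E x z); first by rewrite -hz; apply: rr_edge.
  case hzx : (E z x).
    have := beta_ge hzx; rewrite (dist_sym nxz) hz; lia.
  have hne : nonedge E x z by rewrite /nonedge nxz hxz hzx.
  have := alpha_le hne; rewrite hz; lia.
- have [z hz] := dist_ex x (j := n - (alpha E - 1)) ltac:(lia).
  have nxz : x != z by rewrite -dist0 hz; lia.
  have hzx' : dist z x = alpha E - 1 by rewrite (dist_sym nxz) hz; lia.
  case hzx : (E z x); first by rewrite -hzx'; apply: ll_edge.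
  case hxz : (E x z).
    have := beta_ge hxz; rewrite hz; lia.
  have hne : nonedge E z x by rewrite /nonedge eq_sym nxz hxz hzx.
  have := alpha_le hne; rewrite hzx'; lia.
Qed.

Lemma SNE_valid n (E : rel 'I_n) a c : optimal E -> alpha E < beta E ->
  nonedge E a c -> dist a c = alpha E -> rr E a = alpha E - 1 /\ ll E c = alpha E - 1.
Proof.
move=> hopt hab hne hd; have hE := hopt.1.
case/and3P: hne => nac /negbTE hac /negbTE hca.
have := rr_nedge hE nac hac; have := ll_nedge hE nac hac.
have [h1 _] := G1 a hopt hab; have [_ h2] := G1 c hopt hab.
rewrite hd; lia.
Qed.

Lemma SNE_pq n (E : rel 'I_n) a c : cid2 E -> nonedge E a c ->
  rr E c <= n - dist a c - 1 /\ ll E a <= n - dist a c - 1.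
Proof.
move=> hE /and3P [nac _ /negbTE hca].
have nca : c != a by rewrite eq_sym.
have := rr_nedge hE nca hca; have := ll_nedge hE nca hca.
rewrite (dist_sym nac); have := dist_pos nac; have := dist_lt a c; lia.
Qed.

Lemma K2 n (E : rel 'I_n) a c : optimal E -> alpha E < beta E ->
  nonedge E a c -> dist a c = alpha E -> rr E c + ll E a <= n - alpha E - 1 -> False.
Proof.
move=> hopt hab hne hd hs.
have [hra hlc] := SNE_valid hopt hab hne hd.
have := WS hopt hab hne hd hra hlc.
have [h1 _] := G1 c hopt hab; have [_ h2] := G1 a hopt hab.
have := alpha_pos E (leq_ltn_trans (leq0n _) (ltn_ord a)).
lia.
Qed.

Lemma K1 n (E : rel 'I_n) : optimal E -> alpha E < beta E -> 2 * beta E + alpha E <= n -> False.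
Proof.
move=> hopt hab hn; have hE := hopt.1.
have hbn : beta E < n.
  have [x [y [hxy hd]]] := beta_ex (leq_ltn_trans (leq0n _) hab).
  by rewrite -hd dist_lt.
have [a [c [hne hd]]] := alpha_ex (ltn_trans hab hbn).
have [hra hlc] := SNE_valid hopt hab hne hd.
have := WS hopt hab hne hd hra hlc.
have [h1 _] := G1 c hopt hab; have [_ h2] := G1 a hopt hab.
have := rr_le_beta c hE; have := ll_le_beta a hE.
have := alpha_pos E (leq_ltn_trans (leq0n _) (ltn_ord a)).
lia.
Qed.

Lemma cw_sum n (u v w : 'I_n) : cw u v w -> dist u v + dist v w + dist w u = n.
Proof. rewrite cwE; dsimp; lia. Qed.

Lemma cw_rot n (u v w : 'I_n) : cw u v w -> cw v w u.
Proof. rewrite !cwE; dsimp; lia. Qed.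

Lemma K3 n (E : rel 'I_n) u v w : optimal E -> alpha E < beta E -> cw u v w ->
  nonedge E u v -> dist u v = alpha E -> nonedge E v w -> dist v w = alpha E -> E w u -> False.
Proof.
move=> hopt hab hc huv hduv hvw hdvw hwu; have hE := hopt.1.
have hs := cw_sum hc.
have [hra hlc] := SNE_valid hopt hab huv hduv.
have hW := WS hopt hab huv hduv hra hlc.
have nvw : v != w by case/and3P: hvw.
have hvw' : E v w = false by case/and3P: hvw => _ /negbTE.
have hp : rr E v = alpha E - 1.
  have := rr_nedge hE nvw hvw'; have [h1 _] := G1 v hopt hab; lia.
have hq1 := ll_edge hE hwu; have hq2 := ll_le_beta u hE.
have hC : 0 < dist w u by apply: dist_pos; case/and4P: (cw_rot (cw_rot hc)).
have ha1 := alpha_pos E (leq_ltn_trans (leq0n _) (ltn_ord u)).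
have key1 : 3 * dist w u < 2 * ll E u.
  move: hW; rewrite hp; clear -hs hq1 hduv hdvw hC ha1.
  move: hs hq1 hduv hdvw hC ha1.
  move: (alpha E) (ll E u) (dist w u) (dist u v) (dist v w) => a q C d1 d2; lia.
have [x [y [hxy hd]]] := beta_ex (leq_ltn_trans (leq0n _) hab).
have hL := WL hopt hxy hd.
have [hp2 hq2'] := pq_le hE hxy; rewrite hd in hp2 hq2'.
have [h3 _] := G1 y hopt hab; have [_ h4] := G1 x hopt hab.
clear -hL hp2 hq2' h3 h4 key1 hq2 hs hduv hdvw hab hC ha1.
move: hL hp2 hq2' h3 h4 key1 hq2 hs hduv hdvw hab hC ha1.
move: (alpha E) (beta E) (rr E y) (ll E x) (ll E u) (dist w u) (dist u v) (dist v w) => a b p q L C d1 d2.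
lia.
Qed.

Lemma ne_of_E n (E : rel 'I_n) a b : E a b -> nonedge E a b = false.
Proof. by move=> h; rewrite /nonedge h /= andbF. Qed.

Lemma ne_of_E' n (E : rel 'I_n) a b : E b a -> nonedge E a b = false.
Proof. by move=> h; rewrite /nonedge h /= !andbF. Qed.

Lemma Tri n (E : rel 'I_n) u v w : optimal E -> alpha E < beta E -> cw u v w ->
  extreme E u v -> extreme E v w ->
  [&& E w u, ~~ extreme E w u & ~~ (shortest_nonedge E u v && shortest_nonedge E v w)].
Proof.
move=> hopt hab hc e1 e2; have hE := hopt.1.
have hs := cw_sum hc.
move: (hc); rewrite cwE => /and4P [nuv nvw nuw hlt].
have nwu : w != u by rewrite eq_sym.
have hb0 : 0 < beta E by apply: leq_ltn_trans hab.
have ha1 := alpha_pos E (leq_ltn_trans (leq0n _) (ltn_ord u)).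
have huw : E u w = false.
  apply/negP => huw; case/andP: (cid_int hE hc huw) => huv hvw.
  have d1 : dist u v = beta E.
    by move: e1; rewrite /extreme /longest_edge /shortest_nonedge (ne_of_E huv) huv /= orbF => /eqP.
  have d2 : dist v w = beta E.
    by move: e2; rewrite /extreme /longest_edge /shortest_nonedge (ne_of_E hvw) hvw /= orbF => /eqP.
  have := beta_ge huw; rewrite (dist_add (ltnW hlt)) d1 d2; lia.
have hTrue : E w u -> (dist w u = beta E -> False) -> ~~ (shortest_nonedge E u v && shortest_nonedge E v w) ->
    [&& E w u, ~~ extreme E w u & ~~ (shortest_nonedge E u v && shortest_nonedge E v w)].
  move=> hwu hd hsn; rewrite hwu hsn /= andbT /extreme /longest_edge /shortest_nonedge (ne_of_E hwu) hwu /= orbF.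
  by apply/negP => /eqP.
rewrite /extreme /longest_edge /shortest_nonedge in e1 e2.
move: e1 e2.
case/orP => [/andP [huv /eqP d1] | /andP [huv /eqP d1]];
case/orP => [/andP [hvw /eqP d2] | /andP [hvw /eqP d2]].
- have [hwu|hwu] : E w u \/ E w u = false by case: (E w u); [left|right].
    apply: hTrue => //; last by rewrite /shortest_nonedge (ne_of_E huv).
    move=> d3; apply: (K1 hopt hab); lia.
  exfalso; have hne : nonedge E w u by rewrite /nonedge nwu hwu huw.
  have := alpha_le hne; move=> h; apply: (K1 hopt hab); lia.
- have [hwu|hwu] : E w u \/ E w u = false by case: (E w u); [left|right].
    apply: hTrue => //; last by rewrite /shortest_nonedge (ne_of_E huv).
    move=> d3; apply: (K1 hopt hab); lia.
  exfalso; apply: (K2 hopt hab hvw d2).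
  have := rr_nedge hE nwu hwu; have := ll_le_beta v hE; lia.
- have [hwu|hwu] : E w u \/ E w u = false by case: (E w u); [left|right].
    apply: hTrue => //; last by rewrite /shortest_nonedge (ne_of_E hvw) /= andbF.
    move=> d3; apply: (K1 hopt hab); lia.
  exfalso; apply: (K2 hopt hab huv d1).
  have := ll_nedge hE nwu hwu; have := rr_le_beta v hE; lia.
- have [hwu|hwu] : E w u \/ E w u = false by case: (E w u); [left|right].
    exfalso; exact: (K3 hopt hab hc huv d1 hvw d2 hwu).
  exfalso; apply: (K2 hopt hab huv d1).
  have hvw' : E v w = false by case/and3P: hvw => _ /negbTE.
  have := ll_nedge hE nwu hwu; have := rr_nedge hE nvw hvw'; lia.
Qed.

Lemma pair_out n (E : rel 'I_n) a b c : extreme E a b -> extreme E b c -> E c a ->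
  ~~ (shortest_nonedge E a b && shortest_nonedge E b c) ->
  [\/ [/\ E a b, E b c & E c a], [/\ E b c, E c a & shortest_nonedge E a b]
    | [/\ E c a, E a b & shortest_nonedge E b c]].
Proof.
rewrite /extreme /longest_edge.
case/orP => [/andP [hab _]|hsab]; case/orP => [/andP [hbc _]|hsbc] hca hn.
- by apply: Or31.
- by apply: Or33.
- by apply: Or32.
- by move: hn; rewrite hsab hsbc.
Qed.

Theorem mainTheorem11 (n : nat) (E : rel 'I_n) (u v w : 'I_n) :
  4 <= n ->
  optimal E ->
  alpha E < beta E ->
  cw u v w ->
  ~~ [&& extreme E u v, extreme E v w & extreme E w u] /\
  ([|| extreme E u v && extreme E v w,
       extreme E v w && extreme E w u |
       extreme E w u && extreme E u v] ->
   [|| [&& E u v, E v w & E w u],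
       [&& E u v, E v w & shortest_nonedge E w u],
       [&& E v w, E w u & shortest_nonedge E u v] |
       [&& E w u, E u v & shortest_nonedge E v w]]).
Proof.
move=> _ hopt hab hc.
have hc2 := cw_rot hc; have hc3 := cw_rot hc2.
split.
  apply/negP => /and3P [e1 e2 e3].
  by case/and3P: (Tri hopt hab hc e1 e2) => _; rewrite e3.
case/or3P => /andP [e1 e2].
- case/and3P: (Tri hopt hab hc e1 e2) => h1 _ h3.
  case: (pair_out e1 e2 h1 h3) => [[x1 x2 x3]|[x1 x2 x3]|[x1 x2 x3]].
  + by rewrite x1 x2 x3.
  + by rewrite x1 x2 x3 !orbT.
  + by rewrite x1 x2 x3 !orbT.
- case/and3P: (Tri hopt hab hc2 e1 e2) => h1 _ h3.
  case: (pair_out e1 e2 h1 h3) => [[x1 x2 x3]|[x1 x2 x3]|[x1 x2 x3]].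
  + by rewrite x1 x2 x3.
  + by rewrite x1 x2 x3 !orbT.
  + by rewrite x1 x2 x3 !orbT.
- case/and3P: (Tri hopt hab hc3 e1 e2) => h1 _ h3.
  case: (pair_out e1 e2 h1 h3) => [[x1 x2 x3]|[x1 x2 x3]|[x1 x2 x3]].
  + by rewrite x1 x2 x3.
  + by rewrite x1 x2 x3 !orbT.
  + by rewrite x1 x2 x3 !orbT.
Qed.
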